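(* Let $F$ be a field, let $L_1,\dots,L_m$ be finite separable field extensions of $F$, and let $r_1,\dots,r_m$ be positive integers. Let $L=\prod_{i=1}^m L_i$ and $L'=\prod_{i=1}^m\big(\prod^{r_i}L_i\big)$ (the étale algebra in which $L_i$ appears $r_i$ times). Then $T_{L/F}(F)/R\simeq T_{L'/F}(F)/R$.
   Context: For an étale algebra $E=\prod_j E_j$ over $F$ (a product of finite separable field extensions), the multinorm torus $T_{E/F}$ is the kernel of $\prod_j R_{E_j/F}\mathbb{G}_m\to\mathbb{G}_m$, $(x_j)\mapsto\prod_j N_{E_j/F}(x_j)$. For a torus $T$ over $F$, $T(F)/R$ is the quotient of $T(F)$ by the subgroup of elements $R$-equivalent to the identity, $R$-equivalence being generated by: $x_0\sim x_1$ if some $F$-rational map $f:\mathbb{P}^1\dashrightarrow T$ satisfies $f(0)=x_0$, $f(1)=x_1$. *)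

(* Defs.v *)
From HB Require Import structures.
From mathcomp Require Import all_boot all_order all_algebra all_field.
From Stdlib Require Import Relations.
Set Implicit Arguments. Unset Strict Implicit. Unset Printing Implicit Defensive.
Import GRing.Theory.
Local Open Scope ring_scope.

Section Multinorm.
Variable F : fieldType.

Definition fbasis (E : fieldExtType F) := vbasis (fullv : {vspace E}).

(* N_{E/F}(a) : determinant of the F-linear map "multiplication by a" *)
Definition normE (E : fieldExtType F) (a : E) : F :=
  \det (\matrix_(i, j) coord (fbasis E) j (tnth (fbasis E) i * a)).

(* N_{E(t)/F(t)}(p) for p in E[t]: determinant (over F[t]) of the F[t]-linear
   map "multiplication by p" on E[t] = (F[t])^n, in the basis fbasis E. *)
Definition normP (E : fieldExtType F) (p : {poly E}) : {poly F} :=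
  \det (\matrix_(i, j)
          \poly_(k < size p) coord (fbasis E) j (tnth (fbasis E) i * p`_k)).

Variable I : finType.
Variable E : I -> fieldExtType F.

(* F-points of the multinorm torus T_{E/F}, E = prod_i E i *)
Definition inT (x : forall i, E i) : Prop :=
  (forall i, x i != 0) /\ \prod_(i : I) normE (x i) = 1.

Definition mulT (x y : forall i, E i) : forall i, E i := fun i => x i * y i.

(* Elementary R-link: x = f(0), y = f(1) for an F-rational map
   f : P^1 -/-> T_{E/F} defined at 0 and 1.  Such an f is given by
   f_i = p_i / q_i with p_i in E_i[t], q_i in F[t], q_i(0), q_i(1) != 0,
   p_i(0), p_i(1) != 0 (values in the units), and prod_i N(f_i) = 1 in F(t),
   i.e. prod_i N(p_i) = prod_i q_i^[E_i:F] in F[t]. *)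
Definition Rlink (x y : forall i, E i) : Prop :=
  inT x /\ inT y /\
  exists (p : forall i, {poly E i}) (q : I -> {poly F}),
    [/\ forall i, (q i).[0] != 0 /\ (q i).[1] != 0,
        forall i, (p i).[0] != 0 /\ (p i).[1] != 0,
        \prod_(i : I) normP (p i) = \prod_(i : I) (q i) ^+ \dim (fullv : {vspace E i}),
        forall i, x i = (p i).[0] / ((q i).[0])%:A
      & forall i, y i = (p i).[1] / ((q i).[1])%:A].

Definition Requiv : relation (forall i, E i) := clos_refl_sym_trans _ Rlink.

End Multinorm.

(* T_{E/F}(F)/R and T_{E'/F}(F)/R are isomorphic groups, written out on
   representatives: a map f : T_E(F) -> T_E'(F) inducing a well-defined,
   injective, surjective, multiplicative map of the quotients by R. *)
Definition RquotIso (F : fieldType) (I J : finType)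
    (E : I -> fieldExtType F) (E' : J -> fieldExtType F) : Prop :=
  exists f : (forall i, E i) -> (forall j, E' j),
    [/\ forall x, inT x -> inT (f x),
        forall x y, inT x -> inT y -> (Requiv x y <-> Requiv (f x) (f y)),
        forall x y, inT x -> inT y -> Requiv (f (mulT x y)) (mulT (f x) (f y))
      & forall y, inT y -> exists x, inT x /\ Requiv (f x) y].

(* Main.v *)
Require Import Defs.
From HB Require Import structures.
From mathcomp Require Import all_boot all_order all_algebra all_field.
Set Implicit Arguments. Unset Strict Implicit. Unset Printing Implicit Defensive.
Import GRing.Theory.
Local Open Scope ring_scope.

Section Norms.
Variables (F : fieldType) (E : fieldExtType F).
Local Notation n := (\dim (fullv : {vspace E})).
Local Notation b := (fbasis E).

Definition Me (a : E) : 'M[F]_n :=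
  \matrix_(i, j) coord b j (tnth b i * a).

Lemma normEE (a : E) : normE a = \det (Me a). Proof. by []. Qed.

Lemma expand v : v = \sum_(m < n) coord b m v *: tnth b m.
Proof.
rewrite {1}(coord_vbasis (memvf v)); apply: eq_bigr => m _.
by rewrite (tnth_nth 0).
Qed.

Lemma Me_mul a c : Me (a * c) = Me a *m Me c.
Proof.
apply/matrixP => i j; rewrite !mxE.
rewrite mulrA [tnth b i * a]expand mulr_suml linear_sum; apply: eq_bigr => m _.
by rewrite !mxE -scalerAl linearZ.
Qed.

Lemma Me1 : Me 1 = 1%:M.
Proof.
apply/matrixP => i j; rewrite !mxE mulr1 (tnth_nth 0) coord_free //.
exact: (basis_free (vbasisP _)).
Qed.

Lemma MeD a c : Me (a + c) = Me a + Me c.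
Proof. by apply/matrixP => i j; rewrite !mxE mulrDr linearD. Qed.

Lemma Me0 : Me 0 = 0.
Proof. by apply/matrixP => i j; rewrite !mxE mulr0 linear0. Qed.

Lemma MeZ (x : F) a : Me (x *: a) = x *: Me a.
Proof. by apply/matrixP => i j; rewrite !mxE -scalerAr linearZ. Qed.

Lemma Me_sum (k : nat) (f : 'I_k -> E) : Me (\sum_(l < k) f l) = \sum_(l < k) Me (f l).
Proof.
elim/big_rec2: _ => [|l x y _ <-]; [exact: Me0 | exact: MeD].
Qed.

Lemma normE_mul (a c : E) : normE (a * c) = normE a * normE c.
Proof. by rewrite !normEE Me_mul det_mulmx. Qed.

Lemma normE1 : normE (1 : E) = 1.
Proof. by rewrite normEE Me1 det1. Qed.

Lemma normE_neq0 (a : E) : a != 0 -> normE a != 0.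
Proof.
move=> a0; apply/eqP => h.
have := normE_mul a a^-1; rewrite mulfV // normE1 h mul0r.
by move/eqP; rewrite oner_eq0.
Qed.

Lemma normE_exp (a : E) k : normE (a ^+ k) = normE a ^+ k.
Proof. by elim: k => [|k IH]; rewrite ?expr0 ?normE1 // !exprS normE_mul IH. Qed.

Definition Mp (p : {poly E}) : 'M[{poly F}]_n :=
  \matrix_(i, j) \poly_(k < size p) coord b j (tnth b i * p`_k).

Lemma normPE (p : {poly E}) : normP p = \det (Mp p). Proof. by []. Qed.

Lemma coef_Mp p i j k : (Mp p i j)`_k = Me (p`_k) i j.
Proof.
rewrite !mxE coef_poly; case: ltnP => // h.
by rewrite nth_default // mulr0 linear0.
Qed.

Lemma Mp_mul p q : Mp (p * q) = Mp p *m Mp q.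
Proof.
apply/matrixP => i j; apply/polyP => k.
rewrite coef_Mp coefM Me_sum summxE [in RHS]mxE coef_sum.
under [RHS]eq_bigr do rewrite coefM.
rewrite exchange_big /=; apply: eq_bigr => k2 _.
rewrite Me_mul mxE; apply: eq_bigr => m _.
by rewrite !coef_Mp.
Qed.

Lemma Mp_C (a : E) : Mp a%:P = map_mx polyC (Me a).
Proof.
apply/matrixP => i j; apply/polyP => k.
rewrite coef_Mp !mxE !coefC; case: (k == 0)%N => //.
by rewrite mulr0 linear0.
Qed.

Lemma normP_mul (p q : {poly E}) : normP (p * q) = normP p * normP q.
Proof. by rewrite !normPE Mp_mul det_mulmx. Qed.

Lemma normP_C (a : E) : normP a%:P = (normE a)%:P.
Proof. by rewrite normPE Mp_C det_map_mx. Qed.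

Lemma normP1 : normP (1 : {poly E}) = 1.
Proof. by rewrite -polyC1 normP_C normE1. Qed.

Lemma normP_exp (p : {poly E}) k : normP (p ^+ k) = normP p ^+ k.
Proof. by elim: k => [|k IH]; rewrite ?expr0 ?normP1 // !exprS normP_mul IH. Qed.

Lemma normP_prod (J : finType) (P : pred J) (f : J -> {poly E}) :
  normP (\prod_(j | P j) f j) = \prod_(j | P j) normP (f j).
Proof.
elim/big_rec2: _ => [|j x y _ <-]; [exact: normP1 | exact: normP_mul].
Qed.

Lemma normP_horner (p : {poly E}) (x : F) : (normP p).[x] = normE p.[x%:A].
Proof.
rewrite normPE normEE -[_.[x]]/(horner_eval x _) -det_map_mx; congr (\det _).
apply/matrixP => i j; rewrite !mxE.
rewrite [LHS]/(horner_eval _ _) /horner_eval horner_poly horner_coef.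
rewrite mulr_sumr linear_sum; apply: eq_bigr => k _ /=.
by rewrite exprZn expr1n -scalerAr mulr1 -scalerAr linearZ /= mulrC.
Qed.
End Norms.

Section NormsMore.
Variables (F : fieldType) (E : fieldExtType F).

Lemma normE_alg (c : F) : normE (c%:A : E) = c ^+ \dim (fullv : {vspace E}).
Proof.
by rewrite normEE MeZ Me1 scalemx1 det_scalar.
Qed.

Lemma normE_inv (a : E) : a != 0 -> normE a^-1 = (normE a)^-1.
Proof.
move=> a0; apply: (mulfI (normE_neq0 a0)).
by rewrite -normE_mul !mulfV ?normE1 ?normE_neq0.
Qed.

Lemma normE_div (a c : E) : c != 0 -> normE (a / c) = normE a / normE c.
Proof. by move=> c0; rewrite normE_mul normE_inv. Qed.
End NormsMore.

From Stdlib Require Import FunctionalExtensionality Relations.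

Section Torus.
Variables (F : fieldType) (I : finType) (E : I -> fieldExtType F).
Local Notation T := (forall i, E i).

Definition oneT : T := fun i => 1.
Definition invT (x : T) : T := fun i => (x i)^-1.

Lemma inT_one : inT (oneT : T).
Proof. by split=> [i|]; rewrite /oneT; [rewrite oner_eq0 | apply: big1 => i _; rewrite normE1]. Qed.

Lemma inT_mul (x y : T) : inT x -> inT y -> inT (mulT x y).
Proof.
move=> [x0 xn] [y0 yn]; split.
  by move=> i; rewrite /mulT; apply: mulf_neq0; [apply: x0 | apply: y0].
rewrite /mulT; under eq_bigr => i _ do rewrite normE_mul.
by rewrite big_split /= xn yn mulr1.
Qed.

Lemma inT_inv (x : T) : inT x -> inT (invT x).
Proof.
move=> [x0 xn]; split.
  by move=> i; rewrite /invT invr_eq0; apply: x0.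
rewrite /invT; under eq_bigr => i _ do rewrite normE_inv //.
by rewrite prodfV xn invr1.
Qed.

Lemma inT_val (p : forall i, {poly E i}) (q : I -> {poly F}) (c : F) :
  (forall i, (q i).[c] != 0) -> (forall i, (p i).[c%:A] != 0) ->
  \prod_(i : I) normP (p i) = \prod_(i : I) (q i) ^+ \dim (fullv : {vspace E i}) ->
  inT (fun i => (p i).[c%:A] / ((q i).[c])%:A).
Proof.
move=> q0 p0 hn; have qa0 i : ((q i).[c])%:A != 0 :> E i.
  by rewrite scaler_eq0 negb_or q0 oner_eq0.
split.
  by move=> i; rewrite mulf_neq0 ?invr_eq0 ?p0 ?qa0.
under eq_bigr => i _ do rewrite normE_div // normE_alg.
rewrite prodf_div.
have := congr1 (fun P => P.[c]) hn; rewrite /= !horner_prod.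
under eq_bigr => i _ do rewrite normP_horner.
under [X in _ = X -> _]eq_bigr => i _ do rewrite horner_exp.
move=> ->; rewrite divff // prodf_seq_neq0; apply/allP => i _ /=.
by rewrite expf_neq0.
Qed.

Lemma link_of (x y : T) (p : forall i, {poly E i}) (q : I -> {poly F}) :
  (forall i, (q i).[0] != 0 /\ (q i).[1] != 0) ->
  (forall i, (p i).[0] != 0 /\ (p i).[1] != 0) ->
  \prod_(i : I) normP (p i) = \prod_(i : I) (q i) ^+ \dim (fullv : {vspace E i}) ->
  (forall i, x i = (p i).[0] / ((q i).[0])%:A) ->
  (forall i, y i = (p i).[1] / ((q i).[1])%:A) ->
  Rlink x y.
Proof.
move=> hq hp hn hx hy; split; last split; last by exists p, q.
  have -> : x = (fun i => (p i).[0%:A] / ((q i).[0])%:A).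
    by apply: functional_extensionality_dep => i; rewrite hx scale0r.
  by apply: inT_val => // i; [case: (hq i) | rewrite scale0r; case: (hp i)].
have -> : y = (fun i => (p i).[1%:A] / ((q i).[1])%:A).
  by apply: functional_extensionality_dep => i; rewrite hy scale1r.
by apply: inT_val => // i; [case: (hq i) | rewrite scale1r; case: (hp i)].
Qed.

Lemma link_mul (x y z : T) : Rlink x y -> inT z -> Rlink (mulT x z) (mulT y z).
Proof.
move=> [_ [_ [p [q [hq hp hn hx hy]]]]] [z0 zn].
apply: (@link_of _ _ (fun i => p i * (z i)%:P) q).
- exact: hq.
- by move=> i; rewrite !hornerM !hornerC; case: (hp i) => h0 h1; split; apply: mulf_neq0 => //; apply: z0.
- under eq_bigr => i _ do rewrite normP_mul normP_C.
  by rewrite big_split /= -rmorph_prod zn mulr1.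
- by move=> i; rewrite /mulT hx hornerM hornerC mulrAC.
- by move=> i; rewrite /mulT hy hornerM hornerC mulrAC.
Qed.

Lemma Requiv_mul (x y z : T) : Requiv x y -> inT z -> Requiv (mulT x z) (mulT y z).
Proof.
move=> h zT; elim: h => [a c l|a|a c _ IH|a c d _ IH1 _ IH2].
- by apply: rst_step; apply: link_mul.
- exact: rst_refl.
- exact: rst_sym.
- exact: rst_trans IH2.
Qed.

Lemma mulT1 (x : T) : mulT x oneT = x.
Proof. by apply: functional_extensionality_dep => i; rewrite /mulT mulr1. Qed.
Lemma mulTC (x y : T) : mulT x y = mulT y x.
Proof. by apply: functional_extensionality_dep => i; rewrite /mulT mulrC. Qed.
Lemma mulTA (x y z : T) : mulT x (mulT y z) = mulT (mulT x y) z.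
Proof. by apply: functional_extensionality_dep => i; rewrite /mulT mulrA. Qed.
Lemma mulTV (x : T) : inT x -> mulT x (invT x) = oneT.
Proof.
by move=> [x0 _]; apply: functional_extensionality_dep => i; rewrite /mulT /invT mulfV //; apply: x0.
Qed.

Lemma triv_mul (u w : T) : Requiv u oneT -> Requiv w oneT -> inT w -> Requiv (mulT u w) oneT.
Proof.
move=> hu hw wT; apply: rst_trans (hw).
by have := Requiv_mul hu wT; rewrite [mulT oneT w]mulTC mulT1.
Qed.

Lemma triv_inv (u : T) : Requiv oneT u -> inT u -> Requiv (invT u) oneT.
Proof.
move=> hu uT; have := Requiv_mul hu (inT_inv uT).
by rewrite mulTV // mulTC mulT1.
Qed.
End Torus.

From mathcomp Require Import ring.
Set Implicit Arguments. Unset Strict Implicit. Unset Printing Implicit Defensive.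
Import GRing.Theory.
Local Open Scope ring_scope.

Lemma dim_gt0 (F : fieldType) (E : fieldExtType F) : (0 < \dim (fullv : {vspace E}))%N.
Proof.
rewrite lt0n dimv_eq0; apply/eqP => h.
by have := memvf (1 : E); rewrite h memv0 oner_eq0.
Qed.

Lemma normE_prod (F : fieldType) (E : fieldExtType F) (K : finType) (P : pred K) (h : K -> E) :
  normE (\prod_(k | P k) h k) = \prod_(k | P k) normE (h k).
Proof.
elim/big_rec2: _ => [|k x y _ <-]; [exact: normE1 | exact: normE_mul].
Qed.

Section Main.
Variables (F : fieldType) (m : nat) (L : 'I_m -> fieldExtType F).
Variables (r : 'I_m -> nat) (rpos : forall i, (0 < r i)%N).
Local Notation J := {i : 'I_m & 'I_(r i)}.
Local Notation T := (forall i, L i).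
Local Notation T' := (forall j : J, L (tag j)).

Definition mkJ (P : 'I_m -> Type) (G : forall i, 'I_(r i) -> P i) : forall j : J, P (tag j) :=
  fun j => match j as j0 return P (tag j0) with existT i k => G i k end.

Lemma bigJ (R : comNzRingType) (h : J -> R) :
  \prod_(j : J) h j = \prod_i \prod_(k < r i) h (existT _ i k).
Proof.
rewrite (sig_big_dep xpredT (fun _ => xpredT) (fun i (k : 'I_(r i)) => h (existT _ i k))) /=.
by apply: eq_bigr => -[i k].
Qed.

Lemma prod_if0 (R : comNzRingType) i (A : R) :
  \prod_(k < r i) (if val k == 0%N then A else 1) = A.
Proof.
rewrite (bigD1 (Ordinal (rpos i))) //= big1 ?mulr1 // => k hk.
case: ifP => // /eqP h0; case/eqP: hk; exact: val_inj.
Qed.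

Definition fmap (x : T) : T' := mkJ (P := L) (fun i k => if val k == 0%N then x i else 1).
Definition gmap (y : T') : T := fun i => \prod_(k < r i) (y (existT _ i k) : L i).

Lemma inT_f x : inT x -> inT (fmap x).
Proof.
move=> [x0 xn]; split.
  by move=> [i k] /=; case: ifP => _; rewrite ?oner_eq0 ?x0.
rewrite bigJ -[RHS]xn; apply: eq_bigr => i _ /=.
under eq_bigr => k _ do rewrite (fun_if (@normE _ (L i))) normE1.
exact: prod_if0.
Qed.

Lemma inT_g y : inT y -> inT (gmap y).
Proof.
move=> [y0 yn]; split.
  by move=> i; rewrite /gmap prodf_seq_neq0; apply/allP => k _ /=; apply: y0.
rewrite -[RHS]yn bigJ; apply: eq_bigr => i _.
by rewrite /gmap normE_prod.
Qed.

Lemma link_f x y : Rlink x y -> Rlink (fmap x) (fmap y).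
Proof.
move=> [_ [_ [p [q [hq hp hn hx hy]]]]].
apply: (@link_of F J (fun j => L (tag j)) (fmap x) (fmap y)
  (mkJ (P := fun i => {poly L i}) (fun i k => if val k == 0%N then p i else 1))
  (fun j => if val (tagged j) == 0%N then q (tag j) else 1)).
- by move=> [i k] /=; case: ifP => _; rewrite ?hornerE ?oner_eq0 //; apply: hq.
- by move=> [i k] /=; case: ifP => _; rewrite ?hornerE ?oner_eq0 //; apply: hp.
- rewrite !bigJ; transitivity (\prod_i normP (p i)).
    apply: eq_bigr => i _ /=.
    under eq_bigr => k _ do rewrite (fun_if (@normP _ (L i))) normP1.
    exact: prod_if0.
  rewrite hn; apply: eq_bigr => i _ /=.
  under eq_bigr => k _ do rewrite (fun_if (fun P => P ^+ _)) expr1n.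
  by rewrite prod_if0.
- by move=> [i k] /=; case: ifP => _; rewrite ?hx // !hornerE scale1r invr1.
- by move=> [i k] /=; case: ifP => _; rewrite ?hy // !hornerE scale1r invr1.
Qed.

Lemma link_g y y' : Rlink y y' -> Rlink (gmap y) (gmap y').
Proof.
move=> [_ [_ [p [q [hq hp hn hx hy]]]]].
apply: (@link_of F 'I_m L (gmap y) (gmap y')
  (fun i => \prod_(k < r i) (p (existT _ i k) : {poly L i}))
  (fun i => \prod_(k < r i) q (existT _ i k))).
- move=> i; rewrite !horner_prod !prodf_seq_neq0.
  by split; apply/allP => k _ /=; case: (hq (existT _ i k)).
- move=> i; rewrite !horner_prod !prodf_seq_neq0.
  by split; apply/allP => k _ /=; case: (hp (existT _ i k)).
- transitivity (\prod_j normP (p j)).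
    by rewrite bigJ; apply: eq_bigr => i _; rewrite normP_prod.
  rewrite hn bigJ; apply: eq_bigr => i _; rewrite -prodrXl.
  by apply: eq_bigr.
- move=> i; rewrite /gmap !horner_prod -in_algE rmorph_prod -prodf_div.
  by apply: eq_bigr => k _; rewrite [LHS]hx.
- move=> i; rewrite /gmap !horner_prod -in_algE rmorph_prod -prodf_div.
  by apply: eq_bigr => k _; rewrite [LHS]hy.
Qed.

Lemma gf x : gmap (fmap x) = x.
Proof.
apply: functional_extensionality_dep => i; rewrite /gmap /=.
exact: prod_if0.
Qed.

Lemma f_mul x y : fmap (mulT x y) = mulT (fmap x) (fmap y).
Proof.
apply: functional_extensionality_dep => -[i k]; rewrite /mulT /=.
by case: ifP; rewrite ?mulr1.
Qed.

Section Surj.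
Variable y : T'.
Hypothesis yT : inT y.

Local Notation d i := (\dim (fullv : {vspace L i})).
Definition av i (k : 'I_(r i)) : L i := if val k == 0%N then 1 else y (existT _ i k).
Definition cp i (k : 'I_(r i)) : {poly L i} := 1 + 'X * (av k - 1)%:P.
Definition Qc i : {poly F} := \prod_(k < r i) normP (cp k).
Definition pA : forall j : J, {poly L (tag j)} :=
  mkJ (P := fun i => {poly L i}) (fun i k =>
    (if val k == 0%N then \prod_(k' < r i) cp k' ^+ (d i).-1 else 1) * cp k).
Definition pB : forall j : J, {poly L (tag j)} :=
  mkJ (P := fun i => {poly L i}) (fun i k =>
    if val k == 0%N then \prod_(k' < r i) cp k' ^+ (d i) else 1).
Definition qQ (j : J) : {poly F} := if val (tagged j) == 0%N then Qc (tag j) else 1.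
Definition Aval : T' := fun j => (pA j).[1] / ((qQ j).[1])%:A.
Definition Bval : T' := fun j => (pB j).[1] / ((qQ j).[1])%:A.

Lemma cp0 i k : (@cp i k).[0] = 1.
Proof. by rewrite !hornerE. Qed.

Lemma cp0' i k : (@cp i k).[0%:A] = 1.
Proof. by rewrite scale0r cp0. Qed.

Lemma cp1 i k : (@cp i k).[1] = av k.
Proof. by rewrite hornerD hornerM hornerX !hornerC mul1r addrC subrK. Qed.

Lemma av_neq0 i k : @av i k != 0.
Proof. by rewrite /av; case: ifP => _; [rewrite oner_eq0 | case: yT => y0 _; apply: y0]. Qed.

Lemma Qc0 i : (Qc i).[0] = 1.
Proof.
rewrite /Qc horner_prod; apply: big1 => k _.
by rewrite normP_horner cp0' normE1.
Qed.

Lemma Qc1 i : (Qc i).[1] = \prod_(k < r i) normE (@av i k).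
Proof.
rewrite /Qc horner_prod; apply: eq_bigr => k _.
by rewrite normP_horner scale1r cp1.
Qed.

Lemma Qc1_neq0 i : (Qc i).[1] != 0.
Proof.
by rewrite Qc1 prodf_seq_neq0; apply/allP => k _ /=; rewrite normE_neq0 ?av_neq0.
Qed.

Lemma qQ_ok j : (qQ j).[0] != 0 /\ (qQ j).[1] != 0.
Proof.
rewrite /qQ; case: ifP => _; last by rewrite !hornerE oner_eq0.
by rewrite Qc0 oner_eq0 Qc1_neq0.
Qed.

Lemma prod_cp_neq0 i e : (\prod_(k' < r i) @cp i k' ^+ e).[1] != 0.
Proof.
rewrite horner_prod prodf_seq_neq0; apply/allP => k _ /=.
by rewrite horner_exp cp1 expf_neq0 ?av_neq0.
Qed.

Lemma prod_cp0 i e : (\prod_(k' < r i) @cp i k' ^+ e).[0] = 1.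
Proof.
by rewrite horner_prod; apply: big1 => k _; rewrite horner_exp cp0 expr1n.
Qed.

Local Notation one' := (@oneT F J (fun j => L (tag j))).

Lemma linkA : Rlink one' Aval.
Proof.
apply: (@link_of F J (fun j => L (tag j)) one' Aval pA qQ).
- exact: qQ_ok.
- move=> [i k] /=; rewrite !hornerM cp0 cp1 mulr1.
  case: ifP => _; rewrite ?prod_cp0 ?hornerE ?oner_eq0 ?mul1r ?av_neq0 //.
  by rewrite mulf_neq0 ?av_neq0 ?prod_cp_neq0.
- rewrite !bigJ; apply: eq_bigr => i _ /=.
  rewrite /qQ /=.
  under eq_bigr => k _ do rewrite normP_mul (fun_if (@normP _ (L i))) normP1.
  under [RHS]eq_bigr => k _ do rewrite (fun_if (fun P => P ^+ _)) expr1n.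
  rewrite big_split /= !prod_if0 normP_prod.
  under eq_bigr => k _ do rewrite normP_exp.
  rewrite prodrXl -exprSr prednK ?dim_gt0 //.
- move=> [i k] /=; rewrite /oneT /qQ /= !hornerM cp0 mulr1.
  by case: ifP => _; rewrite ?prod_cp0 ?Qc0 !hornerE scale1r invr1.
- by [].
Qed.

Lemma linkB : Rlink one' Bval.
Proof.
apply: (@link_of F J (fun j => L (tag j)) one' Bval pB qQ).
- exact: qQ_ok.
- move=> [i k] /=.
  case: ifP => _; rewrite ?prod_cp0 ?hornerE ?oner_eq0 //.
  by rewrite prod_cp_neq0.
- rewrite !bigJ; apply: eq_bigr => i _ /=.
  rewrite /qQ /=.
  under eq_bigr => k _ do rewrite (fun_if (@normP _ (L i))) normP1.
  under [RHS]eq_bigr => k _ do rewrite (fun_if (fun P => P ^+ _)) expr1n.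
  rewrite !prod_if0 normP_prod.
  under eq_bigr => k _ do rewrite normP_exp.
  by rewrite prodrXl.
- move=> [i k] /=; rewrite /oneT /qQ /=.
  by case: ifP => _; rewrite ?prod_cp0 ?Qc0 !hornerE scale1r invr1.
- by [].
Qed.

Lemma prod_cp1 i e : (\prod_(k' < r i) @cp i k' ^+ e).[1] = (\prod_(k' < r i) av k') ^+ e.
Proof.
by rewrite horner_prod -prodrXl; apply: eq_bigr => k _; rewrite horner_exp cp1.
Qed.

Lemma alg_key (K : fieldType) (a N z : K) e : a != 0 -> N != 0 ->
  a ^+ e * 1 / N * (a ^+ e.+1 / N)^-1 * (z * a) = z.
Proof.
move=> a0 N0; rewrite invf_div exprSr mulr1.
have ae : a ^+ e != 0 by rewrite expf_neq0.
by field; rewrite ae a0 N0.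
Qed.

Lemma surj_key : mulT (mulT Aval (invT Bval)) (fmap (gmap y)) = y.
Proof.
apply: functional_extensionality_dep => -[i k].
rewrite /mulT /invT /Aval /Bval /qQ /fmap /gmap /=.
case: ifP => hk.
- rewrite hornerM cp1 /av hk !prod_cp1.
  have hP : \prod_(k' < r i) @av i k' = \prod_(k' < r i | k' != k) (y (existT _ i k') : L i).
    rewrite (bigD1 k) //= {1}/av hk mul1r; apply: eq_bigr => k' hk'.
    rewrite /av; case: ifP => // h0; case/eqP: hk'; apply: val_inj.
    by rewrite /= (eqP h0) (eqP hk).
  rewrite [X in _ * X](bigD1 k) //= -hP -(prednK (dim_gt0 (L i))).
  apply: alg_key.
    by rewrite prodf_seq_neq0; apply/allP => k' _ /=; apply: av_neq0.
  by rewrite scaler_eq0 negb_or Qc1_neq0 oner_eq0.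
- rewrite mul1r cp1 /av hk !hornerC scale1r invr1 !mulr1.
  by rewrite divr1.
Qed.

End Surj.

Lemma surj y : inT y -> Requiv (fmap (gmap y)) y.
Proof.
move=> yT.
have lA := linkA yT; have lB := linkB yT.
have AT : inT (Aval y) by case: lA => _ [].
have BT : inT (Bval y) by case: lB => _ [].
have h1 : Requiv (Aval y) (@oneT F J (fun j => L (tag j))) by apply/rst_sym/rst_step.
have h2 : Requiv (invT (Bval y)) (@oneT F J (fun j => L (tag j))).
  by apply: triv_inv => //; apply: rst_step.
have h3 : Requiv (mulT (Aval y) (invT (Bval y))) (@oneT F J (fun j => L (tag j))).
  by apply: triv_mul => //; apply: inT_inv.
have h4 := Requiv_mul h3 (inT_f (inT_g yT)).
rewrite surj_key // mulTC mulT1 in h4.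
exact: rst_sym h4.
Qed.
End Main.

Lemma Requiv_map (F : fieldType) (I1 I2 : finType) (E1 : I1 -> fieldExtType F)
  (E2 : I2 -> fieldExtType F) (h : (forall i, E1 i) -> (forall i, E2 i)) :
  (forall x y, Rlink x y -> Rlink (h x) (h y)) ->
  forall x y, Requiv x y -> Requiv (h x) (h y).
Proof.
move=> hl x y; elim => [a c l|a|a c _ IH|a c d _ IH1 _ IH2].
- by apply: rst_step; apply: hl.
- exact: rst_refl.
- exact: rst_sym.
- exact: rst_trans IH2.
Qed.

Unset Implicit Arguments.
Theorem mainTheorem13 (F : fieldType) (m : nat) (L : 'I_m -> fieldExtType F)
    (Lsep : forall i, separable (1%VS : {vspace L i}) fullv)
    (r : 'I_m -> nat) (rpos : forall i, (0 < r i)%N) :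
  RquotIso L (fun p : {i : 'I_m & 'I_(r i)} => L (tag p)).
Proof.
exists (@fmap F m L r); split.
- exact: inT_f.
- move=> x y _ _; split => h.
    by apply: (Requiv_map (h := @fmap F m L r)) h => a b; apply: link_f.
  have := Requiv_map (h := @gmap F m L r) (fun a b => @link_g F m L r a b) h.
  by rewrite !gf.
- by move=> x y _ _; rewrite f_mul; apply: rst_refl.
- move=> y yT; exists (gmap y); split; first exact: inT_g.
  exact: surj.
Qed.
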